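(* Let $\#\mathcal A(k)$ denote the number of $\alpha$-trees of length $k$. Then $\#\mathcal A(0)=1$ and for every $k\ge1$ $$\#\mathcal A(k)=\#\mathcal A(k-1)\cdot\sum_{i=0}^{k-1}\#\mathcal A(i).$$ In particular $\#\mathcal A(1)=1$, $\#\mathcal A(2)=2$, $\#\mathcal A(3)=8$, $\#\mathcal A(4)=96$.
   Context: All trees are finite rooted plane trees: the children of each node are linearly ordered (from ''lowest'' to ''highest''), and for two children $a,b$ of the same node, $b$ lies above $a$ if $b$ comes later in this order. The length of a tree is the maximal distance of a node from the root (a single node has length 0). For a node $a$ of $T$, $T(a)$ is the maximal subtree of $T$ with root $a$. An $\alpha$-tree is a rooted plane tree such that whenever two nodes $a,b$ have the same parent and $b$ lies above $a$, the subtree $T(b)$ has strictly smaller length than $T(a)$. Trees are counted up to isomorphism of rooted plane trees. *)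

(* Defs.v *)
From Stdlib Require Import List Arith.
Import ListNotations.

(* Finite rooted plane trees up to isomorphism: a node with an ordered list of
   children (from lowest to highest). *)
Inductive tree : Type := Node : list tree -> tree.

(* Length: maximal distance of a node from the root (leaf has length 0). *)
Fixpoint height (t : tree) : nat :=
  match t with
  | Node ts =>
      (fix hs (l : list tree) : nat :=
         match l with
         | [] => 0
         | c :: l' => Nat.max (S (height c)) (hs l')
         end) ts
  end.

Fixpoint siblings_ok (l : list tree) : Prop :=
  match l with
  | [] => True
  | a :: l' => Forall (fun b => height b < height a) l' /\ siblings_ok l'
  end.

Fixpoint alpha_tree (t : tree) : Prop :=
  match t with
  | Node ts =>
      siblings_ok ts /\
      (fix all_alpha (l : list tree) : Prop :=
         match l with
         | [] => True
         | c :: l' => alpha_tree c /\ all_alpha l'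
         end) ts
  end.

(* s is an exact duplicate-free enumeration of the alpha-trees of length k,
   so its size is #A(k). *)
Definition enumerates_alpha (k : nat) (s : list tree) : Prop :=
  NoDup s /\ forall t, In t s <-> (alpha_tree t /\ height t = k).

Definition sum_below (N : nat -> nat) (k : nat) : nat :=
  fold_right Nat.add 0 (map N (seq 0 k)).

(* Main.v *)
Require Import Defs.
From Stdlib Require Import List Arith Lia FinFun.
Import ListNotations.

Definition cn (c r : tree) : tree := match r with Node l => Node (c :: l) end.

Fixpoint AB (k : nat) : list tree * list tree :=
  match k with
  | 0 => ([Node []], [Node []])
  | S k => let (a, b) := AB k in
           let a' := flat_map (fun c => map (cn c) b) a in (a', b ++ a')
  end.

Lemma height_cons c l : height (Node (c :: l)) = Nat.max (S (height c)) (height (Node l)).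
Proof. reflexivity. Qed.

Lemma alpha_cons c l : alpha_tree (Node (c :: l)) <->
  alpha_tree c /\ alpha_tree (Node l) /\ Forall (fun b => height b < height c) l.
Proof. cbn [alpha_tree siblings_ok]. tauto. Qed.

Lemma hforall l h : height (Node l) <= h <-> Forall (fun b => S (height b) <= h) l.
Proof.
  induction l as [|c l IH].
  - split; intros; [constructor| simpl; lia].
  - rewrite height_cons, Nat.max_lub_iff, IH. split.
    + intros [H1 H2]; constructor; auto.
    + intros H; inversion H; auto.
Qed.


Lemma forall_iff l h : Forall (fun b => height b < h) l <-> height (Node l) <= h.
Proof.
  rewrite hforall. split; apply Forall_impl; intros; lia.
Qed.

Lemma cn_inj c r c' r' : cn c r = cn c' r' -> c = c' /\ r = r'.
Proof. destruct r, r'; simpl; intro H; injection H; intros; subst; auto. Qed.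

Lemma AB_spec k : let (a, b) := AB k in
  NoDup a /\ NoDup b /\
  (forall t, In t a <-> alpha_tree t /\ height t = k) /\
  (forall t, In t b <-> alpha_tree t /\ height t <= k).
Proof.
  induction k as [|k IH]; simpl.
  - assert (E : forall t, In t [Node []] <-> alpha_tree t /\ height t = 0).
    { intros t; simpl; split.
      - intros [<-|[]]; simpl; auto.
      - intros [Ha Hh]; left. destruct t as [[|c l]]; auto.
        rewrite height_cons in Hh; lia. }
    assert (ND : NoDup [Node []]) by (constructor; [simpl; tauto| constructor]).
    split; [exact ND|split; [exact ND|split; [exact E|]]].
    intros t; split.
    + intros H; apply E in H; split; [tauto|lia].
    + intros [H1 H2]; apply E; split; auto; lia.
  - destruct (AB k) as [a b]. destruct IH as (Na & Nb & Ia & Ib).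
    set (a' := flat_map (fun c => map (cn c) b) a).
    assert (Ia' : forall t, In t a' <-> alpha_tree t /\ height t = S k).
    { intros t. unfold a'. rewrite in_flat_map. split.
      - intros (c & Hc & Ht). apply in_map_iff in Ht as (r & <- & Hr).
        apply Ia in Hc as [Hac Hhc]. apply Ib in Hr as [Har Hhr].
        destruct r as [l]. simpl cn. rewrite alpha_cons, height_cons, forall_iff.
        split; [split; [auto|split; [auto|lia]]|lia].
      - intros [Ha Hh]. destruct t as [[|c l]].
        + simpl in Hh; discriminate.
        + rewrite alpha_cons, forall_iff in Ha. rewrite height_cons in Hh.
          destruct Ha as (H1 & H2 & H3).
          exists c; split.
          * apply Ia; split; auto; lia.
          * apply in_map_iff; exists (Node l); split; auto. apply Ib; split; auto; lia. }
    assert (Na' : NoDup a').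
    { unfold a'. clear Ia Ia'. induction a as [|c a IHa]; simpl; [constructor|].
      inversion Na; subst. apply NoDup_app.
      - apply FinFun.Injective_map_NoDup; auto.
        intros x y H; apply cn_inj in H; tauto.
      - auto.
      - intros t G1 G2. apply in_map_iff in G1 as (r & <- & _).
        apply in_flat_map in G2 as (c' & Hc' & Ht).
        apply in_map_iff in Ht as (r' & E & _). apply cn_inj in E as [-> _]. auto. }
    split; [exact Na'|split; [|split; [exact Ia'|]]].
    + apply NoDup_app; auto. intros t G1 G2. apply Ib in G1. apply Ia' in G2. lia.
    + intros t; split.
      * intros G. apply in_app_iff in G as [G|G]; [apply Ib in G|apply Ia' in G];
          (split; [tauto|lia]).
      * intros [G1 G2]. apply in_app_iff. destruct (Nat.eq_dec (height t) (S k)).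
        -- right; apply Ia'; auto.
        -- left; apply Ib; split; auto; lia.
Qed.

Definition NN k := length (fst (AB k)).

Lemma sum_below_S N n : sum_below N (S n) = sum_below N n + N n.
Proof.
  unfold sum_below. rewrite seq_S, map_app, fold_right_app. simpl.
  generalize (map N (seq 0 n)). intros l; induction l; simpl; lia.
Qed.

Lemma lenB k : length (snd (AB k)) = sum_below NN (S k).
Proof.
  induction k as [|k IH].
  - reflexivity.
  - rewrite sum_below_S, <- IH. unfold NN. simpl. destruct (AB k) as [a b].
    simpl. rewrite length_app. reflexivity.
Qed.

Lemma NN_S k : NN (S k) = NN k * sum_below NN (S k).
Proof.
  rewrite <- lenB. unfold NN. simpl. destruct (AB k) as [a b]. simpl.
  apply flat_map_constant_length. intros; apply length_map.
Qed.

Theorem mainTheorem5 :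
  exists N : nat -> nat,
    (forall k, exists s, enumerates_alpha k s /\ length s = N k) /\
    N 0 = 1 /\
    (forall k, 1 <= k -> N k = N (k - 1) * sum_below N k) /\
    N 1 = 1 /\ N 2 = 2 /\ N 3 = 8 /\ N 4 = 96.
Proof.
  exists NN. split; [|split; [reflexivity|split]].
  - intros k. exists (fst (AB k)). split; [|reflexivity].
    pose proof (AB_spec k) as H. destruct (AB k) as [a b]. simpl.
    split; tauto.
  - intros [|k] Hk; [lia|]. rewrite NN_S. simpl (S k - 1). rewrite Nat.sub_0_r. reflexivity.
  - vm_compute. repeat split.
Qed.
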